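(* Let $K>0$, $S=1/K$, and let $\theta:[S,\infty)\to[0,\infty)$ satisfy $\theta(s)>0$ for every $s>S$. Let $\Delta t,\Delta N>0$ and consider the update $$X(t+\Delta t,N)=X(t,N)+\Delta t\,\theta\big(D(t,N)\big),$$ where the spacing estimate $D(t,N)$ (approximating $-X_N$) is one of the following non-anisotropic discretizations: (a) forward difference $D(t,N)=\frac{X(t,N)-X(t,N+\Delta N)}{\Delta N}$; (b) arithmetic central difference $D(t,N)=\frac{X(t,N-\Delta N)-X(t,N+\Delta N)}{2\Delta N}$; (c) harmonic central difference $D(t,N)=\dfrac{2}{\frac{\Delta N}{X(t,N)-X(t,N+\Delta N)}+\frac{\Delta N}{X(t,N-\Delta N)-X(t,N)}}$. Then in each case the model is not collision-free: there exist positions at time $t$ with $X(t,N-\Delta N)-X(t,N)=S\Delta N$ and $X(t,N)-X(t,N+\Delta N)>S\Delta N$, with the leader stopped ($X(t+\Delta t,N-\Delta N)=X(t,N-\Delta N)$), such that $X(t+\Delta t,N-\Delta N)-X(t+\Delta t,N)<S\Delta N$.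
   Context: $X(t,N)$ is the location at time $t$ of vehicle $N$; vehicle $N-\Delta N$ is the leader and vehicle $N+\Delta N$ the follower of vehicle $N$. $\theta$ is the speed-spacing relation, $K$ the jam density and $S$ the jam spacing. A model is collision-free if spacings $X(t,N-\Delta N)-X(t,N)$ never fall below $S\Delta N$. *)

(* Defs.v *)
From Stdlib Require Import Reals Lra.
Open Scope R_scope.

Inductive scheme := Forward | ArithCentral | HarmonicCentral.

(* X t N : location at time t of vehicle N (leader N - dN, follower N + dN). *)
Definition spacing_est (sc : scheme) (X : R -> R -> R) (dN t N : R) : R :=
  match sc with
  | Forward => (X t N - X t (N + dN)) / dN
  | ArithCentral => (X t (N - dN) - X t (N + dN)) / (2 * dN)
  | HarmonicCentral =>
      2 / (dN / (X t N - X t (N + dN)) + dN / (X t (N - dN) - X t N))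
  end.

(* Main.v *)
Require Import Defs.
From Stdlib Require Import Reals Lra.
Open Scope R_scope.

Theorem theorem4p4 (K : R) (theta : R -> R) (dt dN : R) (sc : scheme) :
  0 < K ->
  (forall s, 1 / K <= s -> 0 <= theta s) ->
  (forall s, 1 / K < s -> 0 < theta s) ->
  0 < dt -> 0 < dN ->
  exists (X : R -> R -> R) (t N : R),
    X t (N - dN) - X t N = (1 / K) * dN /\
    X t N - X t (N + dN) > (1 / K) * dN /\
    X (t + dt) N = X t N + dt * theta (spacing_est sc X dN t N) /\
    X (t + dt) (N - dN) = X t (N - dN) /\
    X (t + dt) (N - dN) - X (t + dt) N < (1 / K) * dN.
Proof.
  intros HK _ Hpos Hdt HdN.
  set (s := 1 / K).
  assert (Hs : 0 < s) by (unfold s; apply Rdiv_lt_0_compat; lra).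
  set (d := match sc with Forward => 2 * s | ArithCentral => 3 / 2 * s
                         | HarmonicCentral => 4 / 3 * s end).
  set (X0 := fun n => if Req_EM_T n (0 - dN) then s * dN
                      else if Req_EM_T n 0 then 0 else - 2 * s * dN).
  set (X := fun t n => if Req_EM_T t 0 then X0 n
                       else if Req_EM_T n 0 then dt * theta d else X0 n).
  assert (A1 : X 0 (0 - dN) = s * dN).
  { unfold X, X0. destruct (Req_EM_T 0 0); [|lra].
    destruct (Req_EM_T (0 - dN) (0 - dN)); lra. }
  assert (A2 : X 0 0 = 0).
  { unfold X, X0. destruct (Req_EM_T 0 0); [|lra].
    destruct (Req_EM_T 0 (0 - dN)); [lra|]. reflexivity. }
  assert (A3 : X 0 (0 + dN) = - 2 * s * dN).
  { unfold X, X0. destruct (Req_EM_T 0 0); [|lra].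
    destruct (Req_EM_T (0 + dN) (0 - dN)); [lra|].
    destruct (Req_EM_T (0 + dN) 0); [lra|]. reflexivity. }
  assert (B1 : X (0 + dt) 0 = dt * theta d).
  { unfold X. destruct (Req_EM_T (0 + dt) 0); [lra|].
    destruct (Req_EM_T 0 0); [reflexivity|lra]. }
  assert (B2 : X (0 + dt) (0 - dN) = s * dN).
  { unfold X, X0. destruct (Req_EM_T (0 + dt) 0); [lra|].
    destruct (Req_EM_T (0 - dN) 0); [lra|].
    destruct (Req_EM_T (0 - dN) (0 - dN)); lra. }
  assert (HD : spacing_est sc X dN 0 0 = d).
  { unfold spacing_est, d; destruct sc; rewrite ?A1, ?A2, ?A3;
    assert (0 < s * dN) by (apply Rmult_lt_0_compat; lra);
    field; repeat split; try lra; nra. }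
  assert (Hd : s < d) by (unfold d; destruct sc; lra).
  pose proof (Hpos d Hd) as Ht.
  assert (0 < s * dN) by (apply Rmult_lt_0_compat; lra).
  exists X, 0, 0.
  rewrite A1, A2, A3, B1, B2, HD.
  split; [lra|]. split; [lra|]. split; [lra|]. split; [lra|].
  assert (0 < dt * theta d) by (apply Rmult_lt_0_compat; lra). lra.
Qed.
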